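(* Let $K$ be a field and $p\colon A\to B$ a morphism of cocommutative Hopf algebras over $K$. For a Hopf subalgebra $C\subseteq B$ let $p^{-1}(C)=\{x\in A \mid (p\otimes \mathrm{id}_A)\Delta(x)-1\otimes x\in C^+\otimes A\}$ (a Hopf subalgebra of $A$), and for a Hopf subalgebra $D\subseteq A$ let $p(D)$ denote its direct image. Then: (i) for all Hopf subalgebras $C$ of $B$, $p(p^{-1}(C))\subseteq C$; (ii) for all Hopf subalgebras $D$ of $A$, $D\subseteq p^{-1}(p(D))$; (iii) for all Hopf subalgebras $C\subseteq B$ and $D\subseteq A$, $D\subseteq p^{-1}(C)$ if and only if $p(D)\subseteq C$; (iv) for every Hopf subalgebra $C\subseteq B$, $C=p(p^{-1}(C))$ if and only if $C=p(D)$ for some Hopf subalgebra $D\subseteq A$.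
   Context: For a coalgebra $C$ with counit $\epsilon$, $C^+=\{x\in C\mid \epsilon(x)=0\}$. Morphisms of Hopf algebras are linear maps that are algebra and coalgebra morphisms. The set $p^{-1}(C)$ is called the h-inverse of $C$ along $p$. *)

(* Defs.v *)
From HB Require Import structures.
From mathcomp Require Import all_boot all_order all_algebra.
From mathcomp Require Import boolp classical_sets.
Set Implicit Arguments. Unset Strict Implicit. Unset Printing Implicit Defensive.
Import GRing.Theory.
Local Open Scope ring_scope.
Local Open Scope classical_set_scope.

(* Tensor products over a field K are modelled concretely: U (x) V is realised
   inside the space of functions {scalar U} -> {scalar V} -> K (bilinear forms on
   the product of the duals), u (x) v being  phi psi |-> phi u * psi v.  Over a field the
   canonical map U (x) V -> (dual U -> dual V -> K) is injective, so equalities of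
   tensors and membership in subspaces P (x) Q are faithfully represented. *)
Section Tensor.
Variable K : fieldType.

Definition tens (U V : lmodType K) := {scalar U} -> {scalar V} -> K.

Definition pure (U V : lmodType K) (u : U) (v : V) : tens U V :=
  fun phi psi => phi u * psi v.

Definition tsum (U V : lmodType K) (s : seq (U * V)) : tens U V :=
  fun phi psi => \sum_(x <- s) phi x.1 * psi x.2.

Definition tsub (U V : lmodType K) (t t' : tens U V) : tens U V :=
  fun phi psi => t phi psi - t' phi psi.

Definition in_tens (U V : lmodType K) (P : set U) (Q : set V) (t : tens U V) :=
  exists s : seq (U * V), (forall x, x \in s -> P x.1 /\ Q x.2) /\ t = tsum s.

Definition tmap (U V U' V' : lmodType K) (f : {linear U -> U'})
  (g : {linear V -> V'}) (t : tens U V) : tens U' V' :=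
  fun phi psi => t (phi \o f) (psi \o g).

End Tensor.

Section Hopf.
Variable K : fieldType.

Definition hopf_axioms (A : algType K) (D : A -> tens A A) (e : {scalar A})
    (S : {linear A -> A}) : Prop :=
  [/\
      ((forall x, in_tens setT setT (D x)) /\
       (forall (a : K) (x y : A), D (a *: x + y) = fun phi psi => a * D x phi psi + D y phi psi)),
      (* coassociativity: (D (x) id) D x = (id (x) D) D x, evaluated on phi (x) psi (x) chi *)
      (forall x s, D x = tsum s -> forall phi psi chi : {scalar A},
          \sum_(u <- s) D u.1 phi psi * chi u.2 = \sum_(u <- s) phi u.1 * D u.2 psi chi),
      (forall x s, D x = tsum s ->
          \sum_(u <- s) e u.1 *: u.2 = x /\ \sum_(u <- s) e u.2 *: u.1 = x),
      ((D 1 = pure 1 1 /\ forall x y s r, D x = tsum s -> D y = tsum r ->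
          D (x * y) = tsum [seq (u.1 * v.1, u.2 * v.2) | u <- s, v <- r]) /\
       (e 1 = 1 /\ forall x y, e (x * y) = e x * e y)) &
      (forall x s, D x = tsum s ->
          \sum_(u <- s) S u.1 * u.2 = e x *: 1 /\ \sum_(u <- s) u.1 * S u.2 = e x *: 1)].

Record hopf (A : algType K) := Hopf {
  hDelta : A -> tens A A;
  hEps : {scalar A};
  hS : {linear A -> A};
  hAx : hopf_axioms hDelta hEps hS }.

Definition cocommutative (A : algType K) (H : hopf A) : Prop :=
  forall x s, hDelta H x = tsum s -> hDelta H x = tsum [seq (u.2, u.1) | u <- s].

Definition hopf_morph (A B : algType K) (HA : hopf A) (HB : hopf B)
    (p : {linear A -> B}) : Prop :=
  [/\ p 1 = 1, (forall x y, p (x * y) = p x * p y),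
      (forall x, hEps HB (p x) = hEps HA x) &
      (forall x, hDelta HB (p x) = tmap p p (hDelta HA x))].

Definition hopf_sub (A : algType K) (H : hopf A) (D : set A) : Prop :=
  [/\ D 0 /\ (forall (a : K) x y, D x -> D y -> D (a *: x + y)),
      D 1 /\ (forall x y, D x -> D y -> D (x * y)),
      (forall x, D x -> in_tens D D (hDelta H x)) &
      (forall x, D x -> D (hS H x))].

Definition hplus (A : algType K) (H : hopf A) (C : set A) : set A :=
  [set c | C c /\ hEps H c = 0].

Definition hinv (A B : algType K) (HA : hopf A) (HB : hopf B)
    (p : {linear A -> B}) (C : set B) : set A :=
  [set x | in_tens (hplus HB C) setT
             (tsub (tmap p (@idfun A) (hDelta HA x)) (pure 1 x))].

End Hopf.

(* Main.v *)
From HB Require Import structures.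
From mathcomp Require Import all_boot all_order all_algebra.
From mathcomp Require Import boolp classical_sets.
Require Import Defs.
From mathcomp Require Import ring.
Import GRing.Theory.
Set Implicit Arguments. Unset Strict Implicit. Unset Printing Implicit Defensive.
Local Open Scope ring_scope.
Local Open Scope classical_set_scope.

Section Gen.
Variable K : fieldType.

Definition mkS (U : lmodType K) (f : U -> K)
  (H : forall a x y, f (a *: x + y) = a * f x + f y) : {scalar U} :=
  HB.pack f (GRing.isLinear.Build K U K *%R f (fun a x y => H a x y)).

Lemma mkSE (U : lmodType K) f H (x : U) : @mkS U f H x = f x.
Proof. by []. Qed.

Definition subsp (V : lmodType K) (M : set V) :=
  M 0 /\ forall a x y, M x -> M y -> M (a *: x + y).

Lemma extE (V : lmodType K) (S : set V) (v : V) : subsp S -> ~ S v ->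
  exists phi : {scalar V}, phi v = 1 /\ forall s, S s -> phi s = 0.
Proof.
move=> [S0 Scl] nSv.
pose P := fun M : set V => (forall a x y, M x -> M y -> M (a*:x+y)) /\ ~ M v /\
   (S `<=` M \/ M = set0).
have [M [[Mcl [nMv SM']] maxM]] : exists A, P A /\ forall B, A `<` B -> ~ P B.
  apply: Zorn_bigcup => F FP Ftot; split.
    move=> a x y [X FX Xx] [Y FY Yy].
    case: (Ftot X Y FX FY) => XY.
      by exists Y => //; apply: (FP Y FY).1 => //; apply: XY.
    by exists X => //; apply: (FP X FX).1 => //; apply: XY.
  split; first by move=> [X FX Xv]; exact: (FP X FX).2.1 Xv.
  case: (pselect (exists X, F X /\ S `<=` X)) => [[X [FX SX]]|nX].
    by left => s Ss; exists X => //; exact: SX.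
  right; apply/seteqP; split => // x [X FX Xx].
  case: (FP X FX).2.2 => [SX|X0]; first by exfalso; apply: nX; exists X.
  by rewrite X0 in Xx.
have SM : S `<=` M.
  case: SM' => // M0; exfalso; apply: (maxM S); last first.
    by split => //; split => //; left.
  split; first by rewrite M0 => x.
  by move=> SM; have := SM _ S0; rewrite M0.
have M0 : M 0 by exact: SM.
have Mopp : forall m, M m -> M (- m).
  by move=> m Mm; have := Mcl (-1) m 0 Mm M0; rewrite addr0 scaleN1r.
have MD : forall m m', M m -> M m' -> M (m + m').
  by move=> m m' Mm Mm'; have := Mcl 1 m m' Mm Mm'; rewrite scale1r.
have MZ : forall a m, M m -> M (a *: m).
  by move=> a m Mm; have := Mcl a m 0 Mm M0; rewrite addr0.
have decomp : forall w, exists a, exists m, M m /\ w = m + a *: v.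
  move=> w; case: (pselect (M w)) => Mw.
    by exists 0, w; rewrite scale0r addr0.
  pose B := fun z => exists m mu, M m /\ z = m + mu *: w.
  have Bv : B v.
    apply: contrapT => nBv; apply: (maxM B); last first.
      split.
        move=> a x y [m [mu [Mm ->]]] [m' [mu' [Mm' ->]]].
        exists (a *: m + m'), (a * mu + mu'); split; first exact: Mcl.
        by rewrite scalerDr scalerDl scalerA addrACA.
      split => //; left => s Ss; exists s, 0; split; first exact: SM.
      by rewrite scale0r addr0.
    split; first by move=> m Mm; exists m, 0; rewrite scale0r addr0.
    move=> BM; apply: Mw; apply: BM; exists 0, 1.
    by rewrite scale1r add0r.
  case: Bv => m [mu [Mm vE]].
  have mu0 : mu != 0.
    by apply/eqP => mu0; apply: nMv; rewrite vE mu0 scale0r addr0.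
  exists mu^-1, (- (mu^-1 *: m)); split; first exact/Mopp/MZ.
  rewrite vE scalerDr scalerA mulVf // scale1r.
  by rewrite addrA addNr add0r.
have uniq : forall m m' a b, M m -> M m' -> m + a *: v = m' + b *: v -> a = b.
  move=> m m' a b Mm Mm' E; apply: contrapT => ab; apply: nMv.
  have : (a - b) *: v = m' - m.
    by rewrite scalerBl; apply/eqP; rewrite subr_eq addrAC -E addrAC subrr add0r.
  move=> /(congr1 (fun z => (a - b)^-1 *: z)).
  rewrite scalerA mulVf ?scale1r; last by rewrite subr_eq0; apply/eqP.
  by move=> ->; apply: MZ; apply: MD => //; exact: Mopp.
pose f w := projT1 (cid (decomp w)).
have fP : forall w, exists m, M m /\ w = m + f w *: v.
  by move=> w; exact: (projT2 (cid (decomp w))).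
have flin : forall a x y, f (a *: x + y) = a * f x + f y.
  move=> a x y.
  have [m [Mm E]] := fP (a *: x + y).
  have [mx [Mmx Ex]] := fP x; have [my [Mmy Ey]] := fP y.
  apply/esym; apply: (uniq (a *: mx + my) m) => //; first exact: Mcl.
  rewrite -E {2}Ex {2}Ey scalerDr scalerDl scalerA addrACA.
  by rewrite addrACA.
exists (mkS flin); split.
  rewrite mkSE; have [m [Mm E]] := fP v.
  by apply: (uniq m 0) => //; rewrite -E add0r scale1r.
move=> s Ss; rewrite mkSE; have [m [Mm E]] := fP s.
by apply: (uniq m s) => //; [exact: SM | rewrite -E scale0r addr0].
Qed.

Lemma sep (V : lmodType K) (v : V) : (forall phi : {scalar V}, phi v = 0) -> v = 0.
Proof.
move=> H; apply: contrapT => nv.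
have [|phi [phiv _]] := @extE V [set 0] v _ nv.
  by split => // a x y -> ->; rewrite scaler0 addr0.
by move: (H phi); rewrite phiv => /eqP; rewrite oner_eq0.
Qed.


Fixpoint spanP (V : lmodType K) (ws : seq V) : set V :=
  match ws with
  | [::] => [set 0]
  | w :: ws' => [set z | exists a y, spanP ws' y /\ z = a *: w + y]
  end.

Lemma span_subsp (V : lmodType K) (ws : seq V) : subsp (spanP ws).
Proof.
elim: ws => [|w ws [IH0 IHcl]] /=.
  by split => // a x y -> ->; rewrite scaler0 addr0.
split; first by exists 0, 0; split => //; rewrite scale0r addr0.
move=> a x y [b [x' [Hx' ->]]] [c [y' [Hy' ->]]].
exists (a * b + c), (a *: x' + y'); split; first exact: IHcl.
by rewrite scalerDr scalerA addrACA scalerDl.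
Qed.

Lemma span_mem (V : lmodType K) (ws : seq V) w : w \in ws -> spanP ws w.
Proof.
elim: ws => [|w' ws IH] //=; rewrite inE => /orP[/eqP ->|/IH Hw].
  exists 1, 0; split; first by case: (span_subsp ws).
  by rewrite scale1r addr0.
by exists 0, w; rewrite scale0r add0r.
Qed.

Section Merge.
Variables (X : Type) (V : lmodType K) (comb : X -> K -> X -> X).

Lemma lin0 (G : X -> V -> K) :
  (forall x a c c', G x (a *: c + c') = a * G x c + G x c') -> forall x, G x 0 = 0.
Proof.
move=> HG x; have := HG x 1 0 0; rewrite scale1r addr0 mul1r.
by move=> /(congr1 (fun z => z - G x 0)); rewrite subrr addrK => <-.
Qed.

Lemma merge (x0 : X) (c0 : V) (t : seq (X * V)) : spanP (map snd t) c0 ->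
  exists t' : seq (X * V), size t' = size t /\ map snd t' = map snd t /\
   forall G : X -> V -> K,
     (forall x l y c, G (comb x l y) c = G x c + l * G y c) ->
     (forall x a c c', G x (a *: c + c') = a * G x c + G x c') ->
     \sum_(z <- t') G z.1 z.2 = \sum_(z <- t) G z.1 z.2 + G x0 c0.
Proof.
elim: t c0 => [|[x1 c1] t IH] c0 /=.
  move=> ->; exists [::]; split => //; split => // G _ HG.
  by rewrite big_nil lin0 // addr0.
move=> [a [y [Hy ->]]]; have [t' [st' [mt' Ht']]] := IH y Hy.
exists ((comb x1 a x0, c1) :: t'); split; first by rewrite /= st'.
split; first by rewrite /= mt'.
move=> G HG1 HG2; rewrite !big_cons /= Ht' // HG1 HG2.
by rewrite -!addrA; congr (_ + _); rewrite addrCA.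
Qed.

Variables (J : Type) (Phi : J -> X -> K) (beta : X -> V -> K).
Hypotheses (HPhi : forall j x l y, Phi j (comb x l y) = Phi j x + l * Phi j y)
  (Hb1 : forall x l y c, beta (comb x l y) c = beta x c + l * beta y c)
  (Hb2 : forall x a c c', beta x (a *: c + c') = a * beta x c + beta x c')
  (Hb0 : forall x, (forall j, Phi j x = 0) -> forall c, beta x c = 0).

Lemma GWD (t : seq (X * V)) :
  (forall j (chi : {scalar V}), \sum_(z <- t) Phi j z.1 * chi z.2 = 0) ->
  \sum_(z <- t) beta z.1 z.2 = 0.
Proof.
move: {2}(size t) (leqnn (size t)) => n.
elim: n t => [|n IH] [|[x0 c0] t] //= Hs H; rewrite ?big_nil //.
case: (pselect (spanP (map snd t) c0)) => [Hsp|Hsp].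
  have [t' [st' [_ Ht']]] := merge x0 Hsp.
  have E1 : \sum_(z <- t') beta z.1 z.2 = 0.
    apply: IH; first by rewrite st'.
    move=> j chi; rewrite (Ht' (fun x c => Phi j x * chi c)).
    - by have := H j chi; rewrite big_cons addrC.
    - by move=> x l y c /=; rewrite HPhi mulrDl mulrA.
    - by move=> x a c c' /=; rewrite linearP /= mulrDr mulrCA.
  by rewrite (Ht' beta) // in E1; rewrite big_cons addrC.
have [chi0 [chi1 chi0S]] := extE (span_subsp (map snd t)) Hsp.
have z0 : forall t', {subset map snd t' <= map snd t} -> forall j,
    \sum_(z <- t') Phi j z.1 * chi0 z.2 = 0.
  move=> t' + j; elim: t' => [|z t' IHt] sub; first by rewrite big_nil.
  rewrite big_cons IHt; last by move=> c ct; apply: sub; rewrite inE ct orbT.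
  rewrite chi0S ?mulr0 ?addr0 //; apply: span_mem; apply: sub.
  by rewrite inE eqxx.
have Px0 : forall j, Phi j x0 = 0.
  by move=> j; have := H j chi0; rewrite big_cons chi1 mulr1 z0 ?addr0.
rewrite big_cons Hb0 // add0r; apply: IH => // j chi.
by have := H j chi; rewrite big_cons Px0 mul0r add0r.
Qed.

End Merge.

Definition bilin (U V : lmodType K) (b : U -> V -> K) :=
  (forall a x y c, b (a *: x + y) c = a * b x c + b y c) /\
  (forall x a c c', b x (a *: c + c') = a * b x c + b x c').

Lemma bilin0l (U V : lmodType K) (b : U -> V -> K) : bilin b -> forall c, b 0 c = 0.
Proof.
move=> [H1 _] c; have := H1 1 0 0 c; rewrite scale1r addr0 mul1r.
by move=> /(congr1 (fun z => z - b 0 c)); rewrite subrr addrK => <-.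
Qed.

Lemma bilinNl (U V : lmodType K) (b : U -> V -> K) : bilin b -> forall x c, b (- x) c = - b x c.
Proof.
move=> Hb x c; have := Hb.1 (-1) x 0 c; rewrite addr0 scaleN1r (bilin0l Hb) addr0.
by rewrite mulN1r.
Qed.

Lemma WD2 (U V : lmodType K) (b : U -> V -> K) (s s' : seq (U * V)) : bilin b ->
  tsum s = tsum s' -> \sum_(z <- s) b z.1 z.2 = \sum_(z <- s') b z.1 z.2.
Proof.
move=> Hb E; apply/eqP; rewrite -subr_eq0; apply/eqP.
pose t := s ++ [seq (- z.1, z.2) | z <- s'].
have key : \sum_(z <- t) b z.1 z.2 = 0.
  apply: (@GWD U V (fun x l y => x + l *: y) {scalar U} (fun phi x => phi x)).
  - by move=> j x l y; rewrite linearD linearZ.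
  - by move=> x l y c; rewrite addrC Hb.1 addrC.
  - by move=> x a c c'; rewrite Hb.2.
  - by move=> x Hx c; rewrite (sep Hx) (bilin0l Hb).
  move=> j chi; rewrite big_cat big_map /=.
  under [X in _ + X = 0]eq_bigr do rewrite linearN mulNr.
  rewrite sumrN; apply/eqP; rewrite subr_eq0; apply/eqP.
  by have := congr1 (fun f => f j chi) E; rewrite /tsum.
move: key; rewrite /t big_cat big_map /=.
under [X in _ + X = 0 -> _]eq_bigr do rewrite (bilinNl Hb).
by rewrite sumrN.
Qed.


Lemma bilinZl (U V : lmodType K) (b : U -> V -> K) : bilin b ->
  forall a x c, b (a *: x) c = a * b x c.
Proof. by move=> Hb a x c; have := Hb.1 a x 0 c; rewrite addr0 bilin0l // addr0. Qed.

Lemma bilinDl (U V : lmodType K) (b : U -> V -> K) : bilin b ->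
  forall x y c, b (x + y) c = b x c + b y c.
Proof. by move=> Hb x y c; have := Hb.1 1 x y c; rewrite scale1r mul1r. Qed.

Definition trilin (A : lmodType K) (tau : A -> A -> A -> K) :=
  (forall c, bilin (fun a b => tau a b c)) /\
  (forall a b l c c', tau a b (l *: c + c') = l * tau a b c + tau a b c').

Section HopfFacts.
Variables (A : algType K) (H : hopf A).
Local Notation D := (hDelta H).
Local Notation e := (hEps H).
Local Notation S := (hS H).

Lemma Dall x : exists s, D x = tsum s.
Proof. by have [[Da _] _ _ _ _] := hAx H; have [s [_ ->]] := Da x; exists s. Qed.

Definition rep x : seq (A * A) := projT1 (cid (Dall x)).
Lemma repP x : D x = tsum (rep x).
Proof. exact: (projT2 (cid (Dall x))). Qed.

Lemma Dlin a x y phi psi : D (a *: x + y) phi psi = a * D x phi psi + D y phi psi.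
Proof. by have [[_ Dl] _ _ _ _] := hAx H; rewrite Dl. Qed.

Lemma D0 phi psi : D 0 phi psi = 0.
Proof.
have := Dlin 1 0 0 phi psi; rewrite scale1r addr0 mul1r.
by move=> /(congr1 (fun z => z - D 0 phi psi)); rewrite subrr addrK => <-.
Qed.

Lemma DZ a x phi psi : D (a *: x) phi psi = a * D x phi psi.
Proof. by have := Dlin a x 0 phi psi; rewrite addr0 D0 addr0. Qed.

Lemma DD x y phi psi : D (x + y) phi psi = D x phi psi + D y phi psi.
Proof. by have := Dlin 1 x y phi psi; rewrite scale1r mul1r. Qed.

Lemma Dsum (I : Type) (r : seq I) (f : I -> A) phi psi :
  D (\sum_(i <- r) f i) phi psi = \sum_(i <- r) D (f i) phi psi.
Proof.
elim: r => [|i r IH]; first by rewrite !big_nil D0.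
by rewrite !big_cons DD IH.
Qed.

Lemma counitL x s : D x = tsum s -> \sum_(u <- s) e u.1 *: u.2 = x.
Proof. by have [_ _ Hc _ _] := hAx H; move=> /Hc []. Qed.
Lemma counitR x s : D x = tsum s -> \sum_(u <- s) e u.2 *: u.1 = x.
Proof. by have [_ _ Hc _ _] := hAx H; move=> /Hc []. Qed.

Lemma ev_rep (b : A -> A -> K) x s : bilin b -> D x = tsum s ->
  \sum_(z <- s) b z.1 z.2 = \sum_(z <- rep x) b z.1 z.2.
Proof. by move=> Hb E; apply: WD2 => //; rewrite -E repP. Qed.

Lemma ev_lin (b : A -> A -> K) a x y : bilin b ->
  \sum_(z <- rep (a *: x + y)) b z.1 z.2 =
  a * \sum_(z <- rep x) b z.1 z.2 + \sum_(z <- rep y) b z.1 z.2.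
Proof.
move=> Hb.
rewrite -(@ev_rep b _ ([seq (a *: z.1, z.2) | z <- rep x] ++ rep y)) //.
  by rewrite big_cat big_map /= mulr_sumr; congr (_ + _); apply: eq_bigr => z _;
     rewrite bilinZl.
apply: funext => phi; apply: funext => psi.
rewrite Dlin !repP /tsum big_cat big_map /= mulr_sumr; congr (_ + _).
by apply: eq_bigr => z _; rewrite linearZ /= mulrA.
Qed.

Lemma coass3 (tau : A -> A -> A -> K) x s : trilin tau -> D x = tsum s ->
  \sum_(u <- s) \sum_(w <- rep u.1) tau w.1 w.2 u.2 =
  \sum_(u <- s) \sum_(w <- rep u.2) tau u.1 w.1 w.2.
Proof.
move=> [Ht1 Ht2] Ex.
pose T := [seq (rep u.1, u.2) | u <- s] ++
          [seq ([:: (- u.1, w.1)], w.2) | u <- s, w <- rep u.2].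
have key : \sum_(z <- T) \sum_(w <- z.1) tau w.1 w.2 z.2 = 0.
  apply: (@GWD (seq (A * A)) A
    (fun l a l0 => l ++ [seq (a *: z.1, z.2) | z <- l0]) ({scalar A} * {scalar A})
    (fun j l => \sum_(z <- l) j.1 z.1 * j.2 z.2)
    (fun l c => \sum_(w <- l) tau w.1 w.2 c)).
  - move=> j x' l y; rewrite big_cat big_map /= mulr_sumr; congr (_ + _).
    by apply: eq_bigr => z _; rewrite linearZ /= mulrA.
  - move=> x' l y c; rewrite big_cat big_map /= mulr_sumr; congr (_ + _).
    by apply: eq_bigr => z _; rewrite (bilinZl (Ht1 c)).
  - move=> x' a c c'; rewrite mulr_sumr -big_split /=.
    by apply: eq_bigr => z _; rewrite Ht2.
  - move=> l Hl c.
    rewrite (@WD2 A A (fun a b => tau a b c) l [::]) ?big_nil //.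
    apply: funext => phi; apply: funext => psi.
    by rewrite /tsum big_nil; exact: (Hl (phi, psi)).
  move=> [phi psi] chi /=; rewrite /T big_cat big_map big_allpairs_dep /=.
  have [_ Hco _ _ _] := hAx H.
  have := Hco x s Ex phi psi chi.
  move=> E; apply/eqP; rewrite addr_eq0; apply/eqP.
  transitivity (\sum_(u <- s) D u.1 phi psi * chi u.2).
    by apply: eq_bigr => u _; rewrite repP.
  rewrite E -sumrN; apply: eq_bigr => u _; rewrite repP /tsum mulr_sumr -sumrN.
  by apply: eq_bigr => w _; rewrite big_seq1 /= linearN /= !mulNr opprK mulrA.
move: key; rewrite /T big_cat big_map big_allpairs_dep /=.
move=> /eqP; rewrite addr_eq0 => /eqP ->; rewrite -sumrN; apply: eq_bigr => u _.
rewrite -sumrN; apply: eq_bigr => w _; rewrite big_seq1 /=.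
by rewrite (bilinNl (Ht1 _)) opprK.
Qed.


Lemma antiL x s : D x = tsum s -> \sum_(u <- s) S u.1 * u.2 = e x *: 1.
Proof. by have [_ _ _ _ Ha] := hAx H; move=> /Ha []. Qed.
Lemma antiR x s : D x = tsum s -> \sum_(u <- s) u.1 * S u.2 = e x *: 1.
Proof. by have [_ _ _ _ Ha] := hAx H; move=> /Ha []. Qed.
Lemma Dmul x y s r : D x = tsum s -> D y = tsum r ->
  D (x * y) = tsum [seq (u.1 * v.1, u.2 * v.2) | u <- s, v <- r].
Proof. by have [_ _ _ [[_ Hm] _] _] := hAx H; exact: Hm. Qed.
Lemma D1 : D 1 = pure 1 1.
Proof. by have [_ _ _ [[H1 _] _] _] := hAx H. Qed.
Lemma e1 : e 1 = 1.
Proof. by have [_ _ _ [_ [H1 _]] _] := hAx H. Qed.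
Lemma emul x y : e (x * y) = e x * e y.
Proof. by have [_ _ _ [_ [_ H1]] _] := hAx H. Qed.

Definition lmS (phi : {scalar A}) (a : A) : {scalar A}.
Proof.
refine (@mkS A (fun x => phi (a * x)) _).
by move=> k x y; rewrite mulrDr -scalerAr linearP.
Defined.
Lemma lmSE phi a x : lmS phi a x = phi (a * x). Proof. by []. Qed.

Definition rmS (phi : {scalar A}) (b : A) : {scalar A}.
Proof.
refine (@mkS A (fun x => phi (x * b)) _).
by move=> k x y; rewrite mulrDl -scalerAl linearP.
Defined.
Lemma rmSE phi b x : rmS phi b x = phi (x * b). Proof. by []. Qed.

Definition ev (b : A -> A -> K) x := \sum_(z <- rep x) b z.1 z.2.

Lemma ev0 b : bilin b -> ev b 0 = 0.
Proof.
move=> Hb; rewrite /ev -(@ev_rep b 0 [::]) ?big_nil //.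
by apply: funext => phi; apply: funext => psi; rewrite D0 /tsum big_nil.
Qed.

Lemma ev_sum b (I : Type) (r : seq I) (k : I -> K) (y : I -> A) : bilin b ->
  \sum_(i <- r) k i * ev b (y i) = ev b (\sum_(i <- r) k i *: y i).
Proof.
move=> Hb; elim: r => [|i r IH]; first by rewrite !big_nil ev0.
by rewrite !big_cons IH /ev ev_lin.
Qed.

Lemma eS x : e (S x) = e x.
Proof.
have := antiL (repP x) => /(congr1 e).
rewrite linear_sum linearZ /= e1 mulr1 => <-.
rewrite -{1}(counitR (repP x)) linear_sum linear_sum /=.
by apply: eq_bigr => u _; rewrite !linearZ /= emul mulrC.
Qed.


Definition lin (U : lmodType K) (f : U -> K) := forall k x y, f (k *: x + y) = k * f x + f y.
Lemma lin_sc (U : lmodType K) (chi : {scalar U}) : lin chi.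
Proof. by move=> k x y; rewrite linearP. Qed.
Lemma bilin_prod (f g : A -> K) : lin f -> lin g -> bilin (fun a b => f a * g b).
Proof.
move=> Hf Hg; split => *; first by rewrite Hf mulrDl mulrA.
by rewrite Hg mulrDr mulrCA.
Qed.

Lemma sumZr (I : Type) (r : seq I) (k : I -> K) (f : I -> A) (a : A) :
  a * \sum_(i <- r) k i *: f i = \sum_(i <- r) k i *: (a * f i).
Proof. by rewrite mulr_sumr; apply: eq_bigr => i _; rewrite scalerAr. Qed.

Lemma HG y (phi psi : {scalar A}) :
  \sum_(u <- rep y) \sum_(w <- rep u.1) \sum_(z <- rep u.2)
     psi (w.2 * S z.1) * phi (w.1 * S z.2) = e y * (psi 1 * phi 1).
Proof.
pose tau a b c := \sum_(z <- rep c) psi (b * S z.1) * phi (a * S z.2).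
have Ht : trilin tau.
  split.
    move=> c; split.
      move=> k x x' b; rewrite /tau mulr_sumr -big_split; apply: eq_bigr => z _ /=.
      have := lin_sc (rmS phi (S z.2)) k x x'; rewrite !rmSE => ->.
      by rewrite mulrDr mulrCA.
    move=> a k b b'; rewrite /tau mulr_sumr -big_split; apply: eq_bigr => z _ /=.
    have := lin_sc (rmS psi (S z.1)) k b b'; rewrite !rmSE => ->.
    by rewrite mulrDl mulrA.
  move=> a b k c c'; rewrite /tau.
  apply: (@ev_lin (fun z1 z2 => psi (b * S z1) * phi (a * S z2))).
  apply: bilin_prod; [exact: (lin_sc (lmS psi b \o S)) | exact: (lin_sc (lmS phi a \o S))].
have -> : \sum_(u <- rep y) \sum_(w <- rep u.1) \sum_(z <- rep u.2)
     psi (w.2 * S z.1) * phi (w.1 * S z.2) =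
   \sum_(u <- rep y) \sum_(w <- rep u.1) tau w.1 w.2 u.2 by [].
rewrite (coass3 Ht (repP y)) /tau.
transitivity (\sum_(u <- rep y) psi 1 * phi (u.1 * S u.2)); last first.
  by rewrite -mulr_sumr -linear_sum (antiR (repP y)) linearZ /= mulrCA.
apply: eq_bigr => u _.
pose tau2 a b c := psi (a * S b) * phi (u.1 * S c).
have Ht2 : trilin tau2.
  split.
    move=> c; split.
      move=> k x x' b; rewrite /tau2.
      have := lin_sc (rmS psi (S b)) k x x'; rewrite !rmSE => ->.
      by rewrite mulrDl mulrA.
    move=> a k b b'; rewrite /tau2.
    have E := lin_sc (lmS psi a \o S) k b b'.
    change (psi (a * S (k *: b + b')) = k * psi (a * S b) + psi (a * S b')) in E.
    rewrite E.
    by rewrite mulrDl mulrA.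
  move=> a b k c c'; rewrite /tau2.
  have E := lin_sc (lmS phi u.1 \o S) k c c'.
  change (phi (u.1 * S (k *: c + c')) = k * phi (u.1 * S c) + phi (u.1 * S c')) in E.
  rewrite E.
  by rewrite mulrDr mulrCA.
have := coass3 Ht2 (repP u.2); rewrite /tau2 => <-.
transitivity (\sum_(w <- rep u.2) psi (\sum_(z <- rep w.1) z.1 * S z.2) * phi (u.1 * S w.2)).
  by apply: eq_bigr => w _; rewrite -mulr_suml linear_sum.
under eq_bigr do rewrite (antiR (repP _)) linearZ /=.
have -> : phi (u.1 * S u.2) = \sum_(w <- rep u.2) e w.1 * phi (u.1 * S w.2).
  rewrite -{1}(counitL (repP u.2)) linear_sum mulr_sumr linear_sum.
  by apply: eq_bigr => w _; rewrite linearZ /= -scalerAr linearZ.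
by rewrite mulr_sumr; apply: eq_bigr => w _; rewrite mulrCA mulrA.
Qed.


Lemma bilin_prodC (f g : A -> K) : lin f -> lin g -> bilin (fun a b => g b * f a).
Proof.
move=> Hf Hg; split => *; first by rewrite Hf mulrDr mulrCA.
by rewrite Hg mulrDl mulrA.
Qed.

Lemma bilin_sum (I : Type) (r : seq I) (b : I -> A -> A -> K) :
  (forall i, bilin (b i)) -> bilin (fun x y => \sum_(i <- r) b i x y).
Proof.
move=> Hb; split.
  by move=> k x x' c; rewrite mulr_sumr -big_split; apply: eq_bigr => i _; rewrite (Hb i).1.
by move=> x k c c'; rewrite mulr_sumr -big_split; apply: eq_bigr => i _; rewrite (Hb i).2.
Qed.

Lemma DS x (phi psi : {scalar A}) :
  D (S x) phi psi = \sum_(u <- rep x) phi (S u.2) * psi (S u.1).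
Proof.
pose F (a b c : A) := \sum_(z <- rep c) \sum_(al <- rep (S a)) \sum_(w <- rep b)
    psi (al.2 * (w.2 * S z.1)) * phi (al.1 * (w.1 * S z.2)).
have HF : trilin F.
  split.
    move=> c; split.
      move=> k a a' b; rewrite /F linearP /= mulr_sumr -big_split; apply: eq_bigr => z _.
      apply: (@ev_lin (fun al1 al2 => \sum_(w <- rep b)
          psi (al2 * (w.2 * S z.1)) * phi (al1 * (w.1 * S z.2)))).
      apply: bilin_sum => w; apply: bilin_prodC.
        exact: (lin_sc (rmS phi (w.1 * S z.2))).
      exact: (lin_sc (rmS psi (w.2 * S z.1))).
    move=> a k b b'; rewrite /F mulr_sumr -big_split; apply: eq_bigr => z _.
    rewrite mulr_sumr -big_split; apply: eq_bigr => al _.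
    apply: (@ev_lin (fun w1 w2 =>
          psi (al.2 * (w2 * S z.1)) * phi (al.1 * (w1 * S z.2)))).
    apply: bilin_prodC.
      exact: (lin_sc (rmS (lmS phi al.1) (S z.2))).
    exact: (lin_sc (rmS (lmS psi al.2) (S z.1))).
  move=> a b k c c'; rewrite /F.
  apply: (@ev_lin (fun z1 z2 => \sum_(al <- rep (S a)) \sum_(w <- rep b)
    psi (al.2 * (w.2 * S z1)) * phi (al.1 * (w.1 * S z2)))).
  apply: bilin_sum => al; apply: bilin_sum => w; apply: bilin_prod.
    exact: (lin_sc (lmS (lmS psi al.2) w.2 \o S)).
  exact: (lin_sc (lmS (lmS phi al.1) w.1 \o S)).
transitivity (\sum_(u <- rep x) \sum_(v <- rep u.2) F u.1 v.1 v.2).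
  rewrite -{1}(counitR (repP x)) linear_sum Dsum; apply: eq_bigr => u _.
  rewrite linearZ DZ repP /tsum mulr_sumr /F.
  transitivity (\sum_(al <- rep (S u.1)) \sum_(v <- rep u.2) \sum_(w <- rep v.1)
     \sum_(z <- rep v.2) psi (al.2 * (w.2 * S z.1)) * phi (al.1 * (w.1 * S z.2))).
    apply: eq_bigr => al _; have := HG u.2 (lmS phi al.1) (lmS psi al.2).
    by rewrite !lmSE !mulr1 => ->; rewrite [psi _ * _]mulrC.
  rewrite exchange_big; apply: eq_bigr => v _.
  transitivity (\sum_(al <- rep (S u.1)) \sum_(z <- rep v.2) \sum_(w <- rep v.1)
     psi (al.2 * (w.2 * S z.1)) * phi (al.1 * (w.1 * S z.2))).
    by apply: eq_bigr => al _; exact: exchange_big.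
  exact: exchange_big.
rewrite -(coass3 HF (repP x)) /F.
transitivity (\sum_(u <- rep x) e u.1 * ev (fun z1 z2 => phi (S z2) * psi (S z1)) u.2); last first.
  rewrite ev_sum ?(counitL (repP x)) //.
  apply: bilin_prodC; [exact: (lin_sc (psi \o S)) | exact: (lin_sc (phi \o S))].
apply: eq_bigr => u _; rewrite exchange_big /ev mulr_sumr; apply: eq_bigr => z _.
transitivity (\sum_(v <- rep u.1) D (S v.1 * v.2) (rmS phi (S z.2)) (rmS psi (S z.1))).
  apply: eq_bigr => v _; rewrite (Dmul (repP _) (repP _)) /tsum big_allpairs_dep /=.
  apply: eq_bigr => al _; apply: eq_bigr => w _; by rewrite !mulrA [LHS]mulrC.
have -> : \sum_(v <- rep u.1) D (S v.1 * v.2) (rmS phi (S z.2)) (rmS psi (S z.1)) =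
  D (\sum_(v <- rep u.1) S v.1 * v.2) (rmS phi (S z.2)) (rmS psi (S z.1)).
  by rewrite Dsum.
by rewrite (antiL (repP u.1)) DZ D1 /pure !rmSE !mul1r.
Qed.

End HopfFacts.

Lemma DS_cc (A : algType K) (H : hopf A) x s : cocommutative H -> hDelta H x = tsum s ->
  hDelta H (hS H x) = tsum [seq (hS H u.1, hS H u.2) | u <- s].
Proof.
move=> cc Ex; apply: funext => phi; apply: funext => psi.
rewrite DS /tsum big_map /=.
rewrite -(@ev_rep _ H (fun a b => phi (hS H b) * psi (hS H a)) x [seq (u.2, u.1) | u <- s]).
- by rewrite big_map.
- by apply: bilin_prodC; [exact: (lin_sc (psi \o hS H)) | exact: (lin_sc (phi \o hS H))].
- exact: cc.
Qed.

Section Reduce.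
Variables (U V : lmodType K).

Definition lsl (s : seq (U * V)) (chi : {scalar V}) := \sum_(u <- s) chi u.2 *: u.1.
Definition rsl (s : seq (U * V)) (phi : {scalar U}) := \sum_(u <- s) phi u.1 *: u.2.

Lemma lsl_phi s chi (phi : {scalar U}) : phi (lsl s chi) = \sum_(u <- s) chi u.2 * phi u.1.
Proof. by rewrite linear_sum; apply: eq_bigr => u _; rewrite linearZ. Qed.
Lemma rsl_phi s phi (psi : {scalar V}) : psi (rsl s phi) = \sum_(u <- s) phi u.1 * psi u.2.
Proof. by rewrite linear_sum; apply: eq_bigr => u _; rewrite linearZ. Qed.

Lemma merge_step (a : U) (b : V) (t : seq (U * V)) : spanP (map snd t) b ->
  exists t', size t' = size t /\ tsum t' = tsum ((a, b) :: t) /\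
    (forall chi, lsl t' chi = lsl ((a, b) :: t) chi) /\
    (forall phi, rsl t' phi = rsl ((a, b) :: t) phi).
Proof.
move=> Hb; have [t' [st' [_ Ht']]] := @merge U V (fun x l y => x + l *: y) a b t Hb.
exists t'; split => //; split.
  apply: funext => phi; apply: funext => psi; rewrite /tsum big_cons.
  rewrite (Ht' (fun x c => phi x * psi c)) /=; first by rewrite addrC.
    by move=> x l y c; rewrite linearD linearZ /= mulrDl mulrA.
  by move=> x k c c'; rewrite linearP /= mulrDr mulrCA.
split.
  move=> chi; apply/eqP; rewrite -subr_eq0; apply/eqP; apply: sep => phi.
  rewrite linearB /= !lsl_phi big_cons /=.
  rewrite (Ht' (fun x c => chi c * phi x)) /=; first by rewrite (addrC (chi b * phi a)) subrr.
    by move=> x l y c; rewrite linearD linearZ /= mulrDr mulrCA.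
  by move=> x k c c'; rewrite linearP /= mulrDl mulrA.
move=> phi; apply/eqP; rewrite -subr_eq0; apply/eqP; apply: sep => psi.
rewrite linearB /= !rsl_phi big_cons /=.
rewrite (Ht' (fun x c => phi x * psi c)) /=; first by rewrite (addrC (phi a * psi b)) subrr.
  by move=> x l y c; rewrite linearD linearZ /= mulrDl mulrA.
by move=> x k c c'; rewrite linearP /= mulrDr mulrCA.
Qed.
End Reduce.


Lemma reduce (U V : lmodType K) (P : set U) (Q : set V) (s : seq (U * V)) :
  subsp P -> subsp Q ->
  (forall chi, P (lsl s chi)) -> (forall phi, Q (rsl s phi)) ->
  exists s', (forall z, z \in s' -> P z.1 /\ Q z.2) /\ tsum s' = tsum s.
Proof.
move=> [P0 Pcl] [Q0 Qcl]; move: {2}(size s) (leqnn (size s)) => n.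
elim: n s => [|n IH] [|[a b] t] //= Hs HP HQ; try by exists [::].
case: (pselect (spanP (map snd t) b)) => [Hb|Hb].
  have [t' [st' [Et' [Lt' Rt']]]] := merge_step a Hb.
  have [|||s'' [Ms Es]] := IH t'.
  - by rewrite st'.
  - by move=> chi; rewrite Lt'.
  - by move=> phi; rewrite Rt'.
  by exists s''; split => //; rewrite Es Et'.
case: (pselect (spanP (map fst t) a)) => [Ha|Ha].
  have Ha' : spanP (map snd [seq (u.2, u.1) | u <- t]) a.
    by rewrite -map_comp.
  have [t' [st' [Et' [Lt' Rt']]]] := merge_step b Ha'.
  have [|||s'' [Ms Es]] := IH [seq (u.2, u.1) | u <- t'].
  - by rewrite size_map st' size_map.
  - move=> chi; have := HP chi; rewrite /lsl big_map /=.
    have := Rt' chi; rewrite /rsl /= !big_cons big_map /= => <-.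
    by [].
  - move=> phi; have := HQ phi; rewrite /rsl big_map /=.
    have := Lt' phi; rewrite /lsl /= !big_cons big_map /= => <-.
    by [].
  exists s''; split => //; rewrite Es.
  apply: funext => phi; apply: funext => psi.
  have := congr1 (fun f => f psi phi) Et'; rewrite /tsum !big_cons !big_map /=.
  move=> E; rewrite [LHS](eq_bigr (fun u => psi u.1 * phi u.2)); last first.
    by move=> u _; rewrite mulrC.
  rewrite E; congr (_ + _); first by rewrite mulrC.
  by apply: eq_bigr => u _; rewrite mulrC.
have [chi0 [chi1 chi0S]] := extE (span_subsp (map snd t)) Hb.
have [phi0 [phi1 phi0S]] := extE (span_subsp (map fst t)) Ha.
have tz : \sum_(u <- t) chi0 u.2 *: u.1 = 0.
  rewrite big1_seq // => u /andP[_ ut].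
  by rewrite chi0S ?scale0r //; apply: span_mem; exact: map_f.
have tz' : \sum_(u <- t) phi0 u.1 *: u.2 = 0.
  rewrite big1_seq // => u /andP[_ ut].
  by rewrite phi0S ?scale0r //; apply: span_mem; exact: map_f.
have Pa : P a by have := HP chi0; rewrite /lsl big_cons /= chi1 scale1r tz addr0.
have Qb : Q b by have := HQ phi0; rewrite /rsl big_cons /= phi1 scale1r tz' addr0.
have [|||s'' [Ms Es]] := IH t.
- by [].
- move=> chi; have := Pcl (- chi b) a _ Pa (HP chi).
  by rewrite /lsl big_cons /= scaleNr addKr.
- move=> phi; have := Qcl (- phi a) b _ Qb (HQ phi).
  by rewrite /rsl big_cons /= scaleNr addKr.
exists ((a, b) :: s''); split.
  by move=> z; rewrite inE => /orP[/eqP -> //|/Ms].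
apply: funext => phi; apply: funext => psi.
by have := congr1 (fun f => f phi psi) Es; rewrite /tsum !big_cons => ->.
Qed.


Section Two.
Variables (A B : algType K) (HA : hopf A) (HB : hopf B) (p : {linear A -> B}).
Hypothesis pm : hopf_morph HA HB p.

Lemma p1 : p 1 = 1. Proof. by case: pm. Qed.
Lemma pmul x y : p (x * y) = p x * p y. Proof. by case: pm. Qed.
Lemma peps x : hEps HB (p x) = hEps HA x. Proof. by case: pm. Qed.
Lemma pD x : hDelta HB (p x) = tsum [seq (p z.1, p z.2) | z <- rep HA x].
Proof.
case: pm => _ _ _ ->; apply: funext => phi; apply: funext => psi.
by rewrite /tmap repP /tsum big_map.
Qed.

Lemma pS x : p (hS HA x) = hS HB (p x).
Proof.
apply/eqP; rewrite -subr_eq0; apply/eqP; apply: sep => phi; rewrite linearB /=.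
apply/eqP; rewrite subr_eq0; apply/eqP.
pose tau a b c := phi (p (hS HA a) * (p b * hS HB (p c))).
have Ht : trilin tau.
  split.
    move=> c; split.
      by move=> k x1 x2 b; exact: (lin_sc ((rmS phi (p b * hS HB (p c)) \o p) \o hS HA)).
    by move=> a k b b'; exact: (lin_sc (rmS (lmS phi (p (hS HA a))) (hS HB (p c)) \o p)).
  by move=> a b; exact: (lin_sc ((lmS (lmS phi (p (hS HA a))) (p b) \o hS HB) \o p)).
rewrite -{1}(counitR (repP HA x)) !linear_sum /=.
transitivity (\sum_(u <- rep HA x) \sum_(w <- rep HA u.2) tau u.1 w.1 w.2).
  apply: eq_bigr => u _; rewrite !linearZ /=.
  have := antiR (pD u.2); rewrite big_map /= peps => E.
  have -> : hEps HA u.2 * phi (p (hS HA u.1)) = phi (p (hS HA u.1) * (hEps HA u.2 *: 1)).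
    by rewrite -scalerAr mulr1 linearZ.
  by rewrite -E mulr_sumr linear_sum.
rewrite -(coass3 Ht (repP HA x)) -[in RHS](counitL (repP HA x)) !linear_sum /=.
apply: eq_bigr => u _; rewrite /tau.
have -> : \sum_(w <- rep HA u.1) phi (p (hS HA w.1) * (p w.2 * hS HB (p u.2))) =
   phi (p (\sum_(w <- rep HA u.1) hS HA w.1 * w.2) * hS HB (p u.2)).
  rewrite linear_sum mulr_suml linear_sum; apply: eq_bigr => w _.
  by rewrite pmul mulrA.
by rewrite (antiL (repP HA u.1)) !linearZ /= p1 -scalerAl mul1r !linearZ.
Qed.

Definition HI (C : set B) x := exists s' : seq (B * A),
  (forall z, z \in s' -> C z.1 /\ hEps HB z.1 = 0) /\
  forall (phi : {scalar B}) (psi : {scalar A}),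
    \sum_(u <- rep HA x) phi (p u.1) * psi u.2 - phi 1 * psi x =
    \sum_(z <- s') phi z.1 * psi z.2.

Lemma hinvE C x : hinv HA HB p C x <-> HI C x.
Proof.
rewrite /hinv /in_tens /=; split.
  move=> [s [Ms E]]; exists s; split; first by move=> z /Ms [H _]; exact: H.
  move=> phi psi; have := congr1 (fun f => f phi psi) E; rewrite /tsub /tmap /pure repP /tsum /=.
  by move=> <-.
move=> [s [Ms E]]; exists s; split; first by move=> z /Ms H; split.
apply: funext => phi; apply: funext => psi.
by rewrite /tsub /tmap /pure repP /tsum /= -E.
Qed.

Lemma bil_p (phi : {scalar B}) (psi : {scalar A}) : bilin (fun a b => phi (p a) * psi b).
Proof. by apply: bilin_prod; [exact: (lin_sc (phi \o p)) | exact: lin_sc]. Qed.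


Lemma HIsum x s' s (phi : {scalar B}) (psi : {scalar A}) : hDelta HA x = tsum s ->
  (forall (phi : {scalar B}) (psi : {scalar A}),
    \sum_(u <- rep HA x) phi (p u.1) * psi u.2 - phi 1 * psi x =
    \sum_(z <- s') phi z.1 * psi z.2) ->
  \sum_(u <- s) phi (p u.1) * psi u.2 = phi 1 * psi x + \sum_(z <- s') phi z.1 * psi z.2.
Proof.
move=> Ex E.
have := @ev_rep _ HA (fun a b => phi (p a) * psi b) x s (bil_p phi psi) Ex.
move=> ->; by rewrite -E addrC subrK.
Qed.

Lemma HI_sub C : hopf_sub HB C -> subsp (HI C).
Proof.
move=> [[C0 Ccl] _ _ _]; split.
  exists [::]; split => // phi psi.
  rewrite big_nil linear0 mulr0 subr0.
  by have := @ev0 _ HA _ (bil_p phi psi); rewrite /ev.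
move=> a x y [sx [Mx Ex]] [sy [My Ey]].
exists ([seq (a *: z.1, z.2) | z <- sx] ++ sy); split.
  move=> z; rewrite mem_cat => /orP[/mapP [w /Mx [Cw ew] ->]|/My //] /=.
  split; first by have := Ccl a w.1 0 Cw C0; rewrite addr0.
  by rewrite linearZ /= ew mulr0.
move=> phi psi.
have := @ev_lin _ HA (fun a b => phi (p a) * psi b) a x y (bil_p phi psi).
rewrite /ev => ->.
rewrite big_cat big_map /=.
have -> : \sum_(z <- sx) phi (a *: z.1) * psi z.2 = a * \sum_(z <- sx) phi z.1 * psi z.2.
  by rewrite mulr_sumr; apply: eq_bigr => z _; rewrite linearZ /= mulrA.
rewrite -Ex -Ey linearP /=; ring.
Qed.

Lemma D1rep : hDelta HA 1 = tsum [:: (1, 1)].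
Proof.
by apply: funext => phi; apply: funext => psi; rewrite D1 /pure /tsum big_seq1.
Qed.

Lemma HI_1 C : HI C 1.
Proof.
exists [::]; split => // phi psi; rewrite big_nil.
have := @ev_rep _ HA (fun a b => phi (p a) * psi b) 1 _ (bil_p phi psi) D1rep.
by rewrite big_seq1 /= p1 => <-; rewrite subrr.
Qed.

Lemma HI_mul C x y : hopf_sub HB C -> HI C x -> HI C y -> HI C (x * y).
Proof.
move=> [[C0 Ccl] [C1 Cm] _ _] [sx [Mx Ex]] [sy [My Ey]].
exists ([seq (z.1, x * z.2) | z <- sy] ++ [seq (z.1, z.2 * y) | z <- sx] ++
        [seq (z.1 * w.1, z.2 * w.2) | z <- sx, w <- sy]); split.
  move=> z; rewrite !mem_cat => /or3P[/mapP [w /My [Cw ew] ->]|/mapP [w /Mx [Cw ew] ->]|] //.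
  move=> /allpairsPdep[z1 [w1 [/Mx [Cz ez] /My [Cw ew] ->]]] /=.
  by split; [exact: Cm | rewrite emul ez mul0r].
move=> phi psi.
have E1 : \sum_(u <- rep HA (x * y)) phi (p u.1) * psi u.2 =
   \sum_(v <- rep HA y) \sum_(u <- rep HA x) phi (p u.1 * p v.1) * psi (u.2 * v.2).
  have := @ev_rep _ HA (fun a b => phi (p a) * psi b) (x * y) _ (bil_p phi psi)
    (Dmul (repP HA x) (repP HA y)).
  move=> <-; rewrite big_allpairs_dep /= exchange_big /=.
  by apply: eq_bigr => v _; apply: eq_bigr => u _; rewrite pmul.
rewrite E1.
have E2 : forall v : A * A,
   \sum_(u <- rep HA x) phi (p u.1 * p v.1) * psi (u.2 * v.2) =
   phi (p v.1) * psi (x * v.2) + \sum_(z <- sx) phi (z.1 * p v.1) * psi (z.2 * v.2).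
  move=> v; have := @HIsum x sx (rep HA x) (rmS phi (p v.1)) (rmS psi v.2) (repP HA x) Ex.
  by rewrite !rmSE mul1r.
under eq_bigr do rewrite E2.
rewrite big_split /= exchange_big /=.
have E3 : \sum_(v <- rep HA y) phi (p v.1) * psi (x * v.2) =
   phi 1 * psi (x * y) + \sum_(z <- sy) phi z.1 * psi (x * z.2).
  by have := @HIsum y sy (rep HA y) phi (lmS psi x) (repP HA y) Ey; rewrite !lmSE.
have E4 : forall z : B * A,
   \sum_(v <- rep HA y) phi (z.1 * p v.1) * psi (z.2 * v.2) =
   phi z.1 * psi (z.2 * y) + \sum_(w <- sy) phi (z.1 * w.1) * psi (z.2 * w.2).
  move=> z; have := @HIsum y sy (rep HA y) (lmS phi z.1) (lmS psi z.2) (repP HA y) Ey.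
  by rewrite !lmSE mulr1.
rewrite E3; under eq_bigr do rewrite E4.
rewrite big_split /= !big_cat !big_map big_allpairs_dep /=.
ring.
Qed.

Lemma psi_slice (psi chi : {scalar A}) (s : seq (A * A)) :
  psi (\sum_(u <- s) chi u.2 *: u.1) = tsum s psi chi.
Proof. by rewrite linear_sum /tsum; apply: eq_bigr => u _; rewrite linearZ /= mulrC. Qed.

Lemma HI_slice C x s (chi : {scalar A}) : HI C x -> hDelta HA x = tsum s ->
  HI C (\sum_(u <- s) chi u.2 *: u.1).
Proof.
move=> [sx [Mx Ex]] Es.
exists [seq (z.1, \sum_(w <- rep HA z.2) chi w.2 *: w.1) | z <- sx]; split.
  by move=> z /mapP [w /Mx Hw ->].
move=> phi psi.
have E1 : \sum_(v <- rep HA (\sum_(u <- s) chi u.2 *: u.1)) phi (p v.1) * psi v.2 =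
    \sum_(u <- s) hDelta HA u.1 (phi \o p) psi * chi u.2.
  have := @ev_sum _ HA (fun a b => phi (p a) * psi b) _ s (fun u => chi u.2) (fun u => u.1)
    (bil_p phi psi).
  rewrite /ev /= => <-; apply: eq_bigr => u _; rewrite repP /tsum /= mulrC.
  by [].
have [_ Hco _ _ _] := hAx HA.
rewrite E1 (Hco x s Es (phi \o p) psi chi).
pose G := @mkS A (fun b => hDelta HA b psi chi) (fun k a b => Dlin HA k a b psi chi).
have E2 : \sum_(u <- s) (phi \o p) u.1 * hDelta HA u.2 psi chi =
   phi 1 * hDelta HA x psi chi + \sum_(z <- sx) phi z.1 * hDelta HA z.2 psi chi :=
  @HIsum x sx s phi G Es Ex.
rewrite E2 Es -psi_slice.
rewrite addrAC subrr add0r big_map; apply: eq_bigr => z _.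
by rewrite repP -psi_slice.
Qed.

Lemma HI_Delta C x : cocommutative HA -> hopf_sub HB C -> HI C x ->
  in_tens (HI C) (HI C) (hDelta HA x).
Proof.
move=> cc hC Hx.
have Hr : forall phi, HI C (rsl (rep HA x) phi).
  move=> phi; have := @HI_slice C x _ phi Hx (cc x _ (repP HA x)).
  by rewrite big_map.
have [s' [Ms Es]] := @reduce A A (HI C) (HI C) (rep HA x) (HI_sub hC) (HI_sub hC)
  (fun chi => HI_slice chi Hx (repP HA x)) Hr.
by exists s'; split => //; rewrite repP.
Qed.

Lemma S1 (H : hopf B) : hS H 1 = 1.
Proof.
have E : hDelta H 1 = tsum [:: (1, 1)].
  by apply: funext => phi; apply: funext => psi; rewrite D1 /pure /tsum big_seq1.
by have := antiL E; rewrite big_seq1 /= mulr1 e1 scale1r.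
Qed.

Lemma HI_S C x : cocommutative HA -> hopf_sub HB C -> HI C x -> HI C (hS HA x).
Proof.
move=> cc [_ _ _ CS] [sx [Mx Ex]].
exists [seq (hS HB z.1, hS HA z.2) | z <- sx]; split.
  move=> z /mapP [w /Mx [Cw ew] ->] /=; split; first exact: CS.
  by rewrite eS.
move=> phi psi.
have E1 : \sum_(v <- rep HA (hS HA x)) phi (p v.1) * psi v.2 =
    \sum_(u <- rep HA x) phi (p (hS HA u.1)) * psi (hS HA u.2).
  have := @ev_rep _ HA (fun a b => phi (p a) * psi b) (hS HA x) _ (bil_p phi psi)
    (DS_cc cc (repP HA x)).
  by rewrite big_map /= => <-.
rewrite E1; under eq_bigr do rewrite pS.
have := @HIsum x sx (rep HA x) (phi \o hS HB) (psi \o hS HA) (repP HA x) Ex.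
rewrite /= S1 => ->.
by rewrite addrAC subrr add0r big_map.
Qed.

Lemma HI_C C x : hopf_sub HB C -> HI C x -> C (p x).
Proof.
move=> [[C0 Ccl] [C1 _] _ _] [sx [Mx Ex]].
have E : p x = hEps HA x *: 1 + \sum_(z <- sx) hEps HA z.2 *: z.1.
  apply/eqP; rewrite -subr_eq0; apply/eqP; apply: sep => phi.
  have E0 : \sum_(u <- rep HA x) phi (p u.1) * hEps HA u.2 = phi (p x).
    rewrite -[in RHS](counitR (repP HA x)) !linear_sum; apply: eq_bigr => u _.
    by rewrite !linearZ /= mulrC.
  have := Ex phi (hEps HA); rewrite E0 => Ex'.
  rewrite linearB linearD linearZ linear_sum /=.
  under eq_bigr do rewrite linearZ /= mulrC.
  rewrite -Ex'; ring.
have Cs : forall t, {subset t <= sx} -> C (\sum_(z <- t) hEps HA z.2 *: z.1).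
  elim=> [|z t IH] sub; first by rewrite big_nil.
  rewrite big_cons; apply: Ccl.
    by have := Mx z (sub z (mem_head _ _)) => -[].
  by apply: IH => w wt; apply: sub; rewrite inE wt orbT.
by rewrite E; apply: Ccl => //; exact: Cs.
Qed.

Lemma L (C : set B) (D : set A) : hopf_sub HA D -> p @` D `<=` C -> D `<=` HI C.
Proof.
move=> [[D0 Dcl] [D1' _] Ddel _] pDC x Dx.
have [s [Ms Es]] := Ddel x Dx.
exists [seq (p z.1 - hEps HA z.1 *: 1, z.2) | z <- s]; split.
  move=> z /mapP [w /Ms [Dw1 _] ->] /=; split.
    apply: pDC; exists (w.1 - hEps HA w.1 *: 1); last by rewrite linearB linearZ /= p1.
    by have := Dcl (- hEps HA w.1) 1 w.1 D1' Dw1; rewrite addrC scaleNr.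
  by rewrite linearB linearZ /= peps e1 mulr1 subrr.
move=> phi psi.
have := @ev_rep _ HA (fun a b => phi (p a) * psi b) x s (bil_p phi psi) Es.
rewrite /= => <-.
have Ex : phi 1 * psi x = \sum_(z <- s) hEps HA z.1 * phi 1 * psi z.2.
  rewrite -(counitL Es) linear_sum mulr_sumr; apply: eq_bigr => z _.
  by rewrite linearZ /=; ring.
rewrite Ex big_map -sumrB; apply: eq_bigr => z _.
by rewrite linearB linearZ /= mulrBl.
Qed.

Lemma hinv_hopf C : cocommutative HA -> hopf_sub HB C -> hopf_sub HA (hinv HA HB p C).
Proof.
move=> cc hC; have [H0 Hcl] := HI_sub hC.
split.
- split; first by apply/hinvE.
  by move=> a x y /hinvE Hx /hinvE Hy; apply/hinvE; exact: Hcl.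
- split; first by apply/hinvE; exact: HI_1.
  by move=> x y /hinvE Hx /hinvE Hy; apply/hinvE; exact: HI_mul.
- move=> x /hinvE Hx; have [s [Ms Es]] := HI_Delta cc hC Hx.
  by exists s; split => // z /Ms [h1 h2]; split; apply/hinvE.
- by move=> x /hinvE Hx; apply/hinvE; exact: HI_S.
Qed.

End Two.
End Gen.

Unset Implicit Arguments.
Set Strict Implicit.

Theorem lemma2p5 (K : fieldType) (A B : algType K) (HA : hopf A) (HB : hopf B)
  (p : {linear A -> B}) :
  cocommutative HA -> cocommutative HB -> hopf_morph HA HB p ->
  [/\ (forall C : set B, hopf_sub HB C -> p @` hinv HA HB p C `<=` C),
      (forall D : set A, hopf_sub HA D -> D `<=` hinv HA HB p (p @` D)),
      (forall (C : set B) (D : set A), hopf_sub HB C -> hopf_sub HA D ->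
          (D `<=` hinv HA HB p C <-> p @` D `<=` C)) &
      (forall C : set B, hopf_sub HB C ->
          (C = p @` hinv HA HB p C <-> exists D : set A, hopf_sub HA D /\ C = p @` D))].
Proof.
move=> ccA ccB pm; split.
- by move=> C hC y [x /hinvE Hx <-]; exact: (HI_C hC Hx).
- by move=> D hD x Dx; apply/hinvE; apply: (L pm hD) => // y Hy.
- move=> C D hC hD; split.
    by move=> DC y [x Dx <-]; apply: (HI_C hC); apply/hinvE; exact: DC.
  by move=> pDC x Dx; apply/hinvE; exact: (L pm hD pDC).
- move=> C hC; split.
    by move=> E; exists (hinv HA HB p C); split => //; exact: (hinv_hopf pm).
  move=> [D [hD E]]; subst C; apply/seteqP; split.
    move=> y [x Dx <-]; exists x => //; apply/hinvE.
    by apply: (L pm hD) => // z Hz.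
  by move=> y [x Hx <-]; apply: (HI_C hC); apply/hinvE; exact: Hx.
Qed.
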